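(* Let $w>1$ be a fixed-precision binary number represented by $n$ bits, of which the first $m$ correspond to its integer part, and let $b\geq n$. Consider the following algorithm (INV): if $w=1$ return $1$; otherwise set $\hat{x}_0 = 2^{-p}$, where $p\in\mathbb{N}$ is such that $2^p > w \geq 2^{p-1}$, set $s=\lceil \log_2 b\rceil$, and for $i=1,\dots,s$ compute exactly (in fixed precision arithmetic) $x_i = -w\hat{x}_{i-1}^2 + 2\hat{x}_{i-1}$ (Newton's iteration for $1/w$) and let $\hat{x}_i$ be $x_i$ truncated to $b$ bits after the decimal point; return $\hat{x}_s$. Then the returned value $\hat{x}_s$ approximates $\frac{1}{w}$ with error \begin{equation*} \left|\hat{x}_s - \frac{1}{w}\right| \leq \frac{2+ \log_2 b}{2^b}. \end{equation*}
   Context: Numbers are held in fixed precision: an $n$-bit register holding $w=\sum_{j=m-n}^{m-1} w^{(j)}2^j$, with $m$ bits for the integer part and $n-m$ bits for the fractional part. The result of each Newton step is computed exactly using addition and multiplication and then truncated to $b$ bits after the decimal point before being passed to the next step. The corollary follows from a prior result (Theorem B.1 of an earlier paper by the authors) stating that $s$ steps of this truncated iteration give $|\hat{x}_s - \frac{1}{w}| \leq (1/2)^{2^s} + s2^{-b}$. *)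

(* Defs.v *)
From Stdlib Require Import Reals ZArith List.
Open Scope R_scope.

(* Value of an n-bit fixed-precision register with m integer bits:
   w = sum_{j=m-n}^{m-1} w^(j) 2^j.  Bit w^(j) is [bits j], j : Z. *)
Definition fixed_val (n m : nat) (bits : Z -> bool) : R :=
  fold_right Rplus 0
    (map (fun k : nat =>
            let j := (Z.of_nat k + Z.of_nat m - Z.of_nat n)%Z in
            (if bits j then 1 else 0) * powerRZ 2 j)
         (seq 0 n)).

Definition trunc_bits (b : nat) (x : R) : R :=
  IZR (Int_part (x * 2 ^ b)) / 2 ^ b.

Definition ceilR (x : R) : Z := (- Int_part (- x))%Z.

Definition log2R (x : R) : R := ln x / ln 2.

Fixpoint newton_hat (w : R) (b p : nat) (i : nat) : R :=
  match i with
  | O => / 2 ^ p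
  | S i' => let x := newton_hat w b p i' in
            trunc_bits b (- w * x ^ 2 + 2 * x)
  end.

(* Algorithm INV (p is the integer with 2^p > w >= 2^(p-1)). *)
Definition INV (w : R) (b p : nat) : R :=
  if Req_EM_T w 1 then 1
  else newton_hat w b p (Z.to_nat (ceilR (log2R (INR b)))).

(* Main.v *)
Require Import Defs.
From Stdlib Require Import Reals ZArith List Lra Psatz.
Open Scope R_scope.

Lemma trunc_props b x : x - / 2 ^ b < trunc_bits b x <= x.
Proof.
  unfold trunc_bits.
  assert (H2 : 0 < 2 ^ b) by (apply pow_lt; lra).
  destruct (base_Int_part (x * 2 ^ b)) as [H1 H3].
  set (z := IZR (Int_part (x * 2 ^ b))) in *.
  split.
  - apply (Rmult_lt_reg_r (2 ^ b)); auto.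
    unfold Rdiv. rewrite Rmult_assoc, Rinv_l by lra.
    rewrite Rmult_minus_distr_r, Rinv_l by lra. lra.
  - apply (Rmult_le_reg_r (2 ^ b)); auto.
    unfold Rdiv. rewrite Rmult_assoc, Rinv_l by lra. lra.
Qed.

Lemma trunc_nonneg b x : 0 <= x -> 0 <= trunc_bits b x.
Proof.
  intro Hx. unfold trunc_bits.
  assert (H2 : 0 < 2 ^ b) by (apply pow_lt; lra).
  destruct (base_Int_part (x * 2 ^ b)) as [H1 H3].
  assert (0 <= x * 2 ^ b) by nra.
  assert (IZR (Int_part (x * 2 ^ b)) > -1) by lra.
  assert (0 <= IZR (Int_part (x * 2 ^ b))).
  { apply IZR_le. assert (-1 < Int_part (x * 2 ^ b))%Z by (apply lt_IZR; lra). lia. }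
  unfold Rdiv. apply Rmult_le_pos; auto. left; apply Rinv_0_lt_compat; auto.
Qed.

Fixpoint ee (i : nat) : R := match i with O => / 2 | S i => ee i ^ 2 end.

Lemma ee_closed i : ee i = / 2 ^ (2 ^ i).
Proof.
  induction i as [|i IH]; simpl. - lra.
  - rewrite IH. rewrite Nat.add_0_r, pow_add.
    assert (0 < 2 ^ (2 ^ i)) by (apply pow_lt; lra).
    field. lra.
Qed.

Lemma ee_bound i : 0 <= ee i <= / (2 * (INR i + 1)).
Proof.
  induction i as [|i IH]; simpl ee.
  - simpl. lra.
  - rewrite S_INR. destruct IH as [A B].
    assert (0 <= INR i) by apply pos_INR.
    assert (/ (2 * (INR i + 1)) <= / 2).
    { apply Rinv_le_contravar; lra. }
    split. nra.
    assert (Hq : ee i ^ 2 <= / 2 * / (2 * (INR i + 1))) by nra.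
    eapply Rle_trans; [exact Hq|].
    rewrite <- Rinv_mult.
    apply Rinv_le_contravar; nra.
Qed.

Lemma step (e x c i ep : R) :
  0 <= c -> 0 <= i -> 0 <= e <= / (2 * (i + 1)) ->
  0 <= x -> x <= 1 -> x <= e + i * c ->
  ep <= x ^ 2 + c -> ep <= 1 ->
  ep <= e ^ 2 + (i + 1) * c.
Proof.
  intros Hc Hi [He0 He] Hx0 Hx1 Hx Hep1 Hep2.
  assert (He' : e * (2 * (i + 1)) <= 1).
  { apply (Rmult_le_compat_r (2 * (i + 1))) in He; [|lra].
    rewrite Rinv_l in He; lra. }
  destruct (Rle_dec (2 * e + i * c) 1) as [Hcase|Hcase].
  - assert (x ^ 2 <= (e + i * c) ^ 2) by (apply pow_incr; lra).
    assert (0 <= (i * c) * (1 - (2 * e + i * c))) by (apply Rmult_le_pos; nra).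
    assert ((e + i * c) ^ 2 <= e ^ 2 + i * c) by nra.
    lra.
  - assert (i * c > 1 - 2 * e) by lra.
    assert ((i + 1) * (i * c) >= i) by nra.
    assert (i > 0) by nra.
    assert ((i + 1) * c >= 1) by nra.
    nra.
Qed.

Lemma invariant w b p (Hw : 1 < w) (Hp1 : w < 2 ^ p) (Hp2 : 2 ^ p / 2 <= w) i :
  let x := newton_hat w b p i in
  0 <= x /\ w * x <= 1 /\ 1 - w * x <= ee i + INR i * (w * / 2 ^ b).
Proof.
  assert (H2p : 0 < 2 ^ p) by (apply pow_lt; lra).
  assert (H2b : 0 < / 2 ^ b) by (apply Rinv_0_lt_compat, pow_lt; lra).
  induction i as [|i IH]; cbv zeta.
  - simpl. repeat split.
    + left; apply Rinv_0_lt_compat; auto.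
    + apply (Rmult_le_reg_r (2 ^ p)); auto. rewrite Rmult_assoc, Rinv_l; lra.
    + simpl. rewrite Rmult_0_l, Rplus_0_r.
      assert (w * / 2 ^ p >= / 2); [|lra].
      apply Rle_ge, (Rmult_le_reg_r (2 ^ p)); auto.
      rewrite Rmult_assoc, Rinv_l by lra. lra.
  - change (newton_hat w b p (S i)) with
      (trunc_bits b (- w * (newton_hat w b p i) ^ 2 + 2 * newton_hat w b p i)).
    change (ee (S i)) with (ee i ^ 2).
    destruct IH as [A [B C]].
    set (x := newton_hat w b p i) in *.
    set (y := - w * x ^ 2 + 2 * x).
    assert (Hy0 : 0 <= y).
    { unfold y. replace (- w * x ^ 2 + 2 * x) with (x * (2 - w * x)) by ring.
      apply Rmult_le_pos; lra. }
    assert (Hy1 : 1 - w * y = (1 - w * x) ^ 2) by (unfold y; ring).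
    destruct (trunc_props b y) as [T1 T2].
    pose proof (trunc_nonneg b y Hy0) as T3.
    set (t := trunc_bits b y) in *.
    assert (w * y <= 1) by nra.
    assert (w * t <= w * y) by (apply Rmult_le_compat_l; lra).
    repeat split; auto. lra.
    pose proof (ee_bound i).
    assert (0 <= INR i) by apply pos_INR.
    rewrite S_INR.
    apply (step (ee i) (1 - w * x) (w * / 2 ^ b) (INR i)); try lra.
    + left; apply Rmult_lt_0_compat; lra.
    + nra.
    + assert (w * (y - t) < w * / 2 ^ b) by (apply Rmult_lt_compat_l; lra). nra.
    + nra.
Qed.

Lemma fixed_val_0 m bits : fixed_val 0 m bits = 0.
Proof. reflexivity. Qed.

Theorem corollary1 (n m : nat) (bits : Z -> bool) (b p : nat) :
  (m <= n)%nat ->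
  1 < fixed_val n m bits ->
  (n <= b)%nat ->
  fixed_val n m bits < 2 ^ p ->
  2 ^ p / 2 <= fixed_val n m bits ->
  Rabs (INV (fixed_val n m bits) b p - / fixed_val n m bits)
    <= (2 + log2R (INR b)) / 2 ^ b.
Proof.
  intros Hmn Hw Hnb Hp1 Hp2.
  set (w := fixed_val n m bits) in *.
  assert (Hb : (1 <= b)%nat).
  { destruct n. - unfold w in Hw; rewrite fixed_val_0 in Hw; lra. - lia. }
  unfold INV. destruct (Req_EM_T w 1) as [E|_]; [lra|].
  set (s := Z.to_nat (ceilR (log2R (INR b)))).
  assert (Hln2 : 0 < ln 2) by (rewrite <- ln_1; apply ln_increasing; lra).
  assert (HbR : 1 <= INR b) by (apply (le_INR 1); auto).
  assert (Hlb : 0 <= log2R (INR b)).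
  { unfold log2R. apply Rmult_le_pos; [|left; apply Rinv_0_lt_compat; auto].
    destruct (Req_dec (INR b) 1) as [E|E]; [rewrite E, ln_1; lra|].
    rewrite <- ln_1; left; apply ln_increasing; lra. }
  assert (Hs : log2R (INR b) <= INR s < log2R (INR b) + 1).
  { unfold s, ceilR. destruct (base_Int_part (- log2R (INR b))) as [I1 I2].
    assert (0 <= - Int_part (- log2R (INR b)))%Z.
    { assert (Int_part (- log2R (INR b)) <= 0)%Z; [|lia].
      apply le_IZR; lra. }
    rewrite (INR_IZR_INZ (Z.to_nat _)), Z2Nat.id by lia.
    rewrite opp_IZR. lra. }
  assert (H2s : INR b <= 2 ^ s).
  { destruct (Rle_dec (INR b) (2 ^ s)) as [h|h]; auto. exfalso.
    assert (ln (2 ^ s) < ln (INR b)) by (apply ln_increasing; [apply pow_lt|]; lra).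
    rewrite ln_pow in H by lra.
    unfold log2R in Hs.
    assert (ln (INR b) <= INR s * ln 2); [|lra].
    destruct Hs as [Hs _].
    apply (Rmult_le_compat_r (ln 2)) in Hs; [|lra].
    unfold Rdiv in Hs. rewrite Rmult_assoc, Rinv_l in Hs; lra. }
  assert (Hbs : (b <= 2 ^ s)%nat).
  { apply INR_le. rewrite pow_INR. replace (INR 2) with 2 by (simpl; lra). lra. }
  destruct (invariant w b p Hw Hp1 Hp2 s) as [A [B C]].
  set (x := newton_hat w b p s) in *.
  assert (Hee : ee s <= / 2 ^ b).
  { rewrite ee_closed. apply Rinv_le_contravar; [apply pow_lt; lra|].
    apply Rle_pow; lra || auto. }
  assert (H2b : 0 < 2 ^ b) by (apply pow_lt; lra).
  assert (Hd : 0 <= / w - x).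
  { apply (Rmult_le_reg_l w); [lra|]. rewrite Rmult_minus_distr_l, Rinv_r; lra. }
  rewrite Rabs_left1 by lra.
  assert (E1 : / w - x = (1 - w * x) / w) by (field; lra).
  replace (- (x - / w)) with ((1 - w * x) / w) by (rewrite <- E1; ring).
  apply (Rmult_le_reg_r w); [lra|].
  unfold Rdiv. rewrite Rmult_assoc, Rinv_l, Rmult_1_r by lra.
  assert (0 < / 2 ^ b) by (apply Rinv_0_lt_compat; lra).
  assert (ee s * 1 <= / 2 ^ b * w) by nra.
  assert (INR s * (w * / 2 ^ b) <= (1 + log2R (INR b)) * / 2 ^ b * w) by nra.
  nra.
Qed.
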